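(* Let $q$ be a rational number in $[0,1]$. Then there is an expression $q=\frac mn$ (with $m$ a nonnegative integer and $n$ a positive integer) where $n=2^rs$ with $s$ odd and $2^r\ge s-1$; and for any such expression, $\mathbb{Q}[C_n]$ contains a projection $e$ (i.e. $e=e^*=e^2$) with $\mathrm{tr}_{C_n}(e)=q$ and $ne\in\mathbb{Z}[C_n]$.
   Context: $C_n$ denotes a cyclic group of order $n$. For $a\in\mathbb{Q}[C_n]$, $\mathrm{tr}_{C_n}(a)$ is the coefficient of the identity element in $a$; the involution is $(\sum a_g g)^*=\sum \overline{a_g}g^{-1}$. *)

(* Defs.v *)
(* The group algebra Q[C_n] is modelled as the space of
   coefficient functions {ffun 'I_n -> rat}, where the ordinal k : 'I_n stands
   for g^k, g a fixed generator of the cyclic group C_n (so g^i g^j = g^((i+j) mod n)). *)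
From HB Require Import structures.
From mathcomp Require Import all_boot all_order all_algebra.
Set Implicit Arguments. Unset Strict Implicit. Unset Printing Implicit Defensive.
Import Order.TTheory GRing.Theory Num.Theory.
Local Open Scope ring_scope.

Definition gmul (n : nat) (a b : {ffun 'I_n -> rat}) : {ffun 'I_n -> rat} :=
  [ffun k : 'I_n => \sum_(i < n) \sum_(j < n)
      (if ((i + j) %% n == k)%N then a i * b j else 0)].

(* involution: (sum a_g g)^* = sum conj(a_g) g^{-1}; conjugation is trivial
   on rationals, and (g^i)^{-1} = g^k with i + k = 0 mod n. *)
Definition gstar (n : nat) (a : {ffun 'I_n -> rat}) : {ffun 'I_n -> rat} :=
  [ffun k : 'I_n => \sum_(i < n) (if ((i + k) %% n == 0)%N then a i else 0)].

Definition gtr (n : nat) (a : {ffun 'I_n -> rat}) : rat :=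
  \sum_(i < n | (i == 0 :> nat)) a i.

Definition gintegral (n : nat) (a : {ffun 'I_n -> rat}) : Prop :=
  forall i : 'I_n, exists z : int, a i = z%:~R.

Definition gscale (n : nat) (c : rat) (a : {ffun 'I_n -> rat}) : {ffun 'I_n -> rat} :=
  [ffun k : 'I_n => c * a k].

(* Main.v *)
Require Import Defs.
From HB Require Import structures.
From mathcomp Require Import all_boot all_order all_algebra all_field.
From mathcomp Require Import ring lra zify.
Set Implicit Arguments. Unset Strict Implicit. Unset Printing Implicit Defensive.
Import Order.TTheory GRing.Theory Num.Theory.
Local Open Scope ring_scope.

Definition ev (n : nat) (z : algC) (a : {ffun 'I_n -> rat}) : algC :=
  \sum_(k < n) ratr (a k) * z ^+ k.

Lemma geo0 (w : algC) N : w ^+ N = 1 -> w != 1 -> \sum_(i < N) w ^+ i = 0.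
Proof.
move=> h1 h2; have := subrX1 w N; rewrite h1 subrr => /esym/eqP.
by rewrite mulf_eq0 subr_eq0 (negbTE h2) => /eqP.
Qed.

Lemma sum_root n (zeta : algC) (pz : n.-primitive_root zeta) m :
  \sum_(t < n) zeta ^+ (m * t) = if (n %| m)%N then n%:R else 0.
Proof.
have n0 : (0 < n)%N := prim_order_gt0 pz.
case: ifP => h.
  rewrite (eq_bigr (fun _ => 1)) ?sumr_const ?card_ord //.
  move=> t _; rewrite exprM.
  by move: h; rewrite (prim_order_dvd pz) => /eqP ->; rewrite expr1n.
under eq_bigr do rewrite exprM.
apply: geo0.
  by rewrite -exprM mulnC exprM (prim_expr_order pz) expr1n.
by rewrite -(prim_order_dvd pz) h.
Qed.

Lemma ev_mul n (z : algC) (n0 : (0 < n)%N) (hz : z ^+ n = 1) (a b : {ffun 'I_n -> rat}) :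
  ev z (gmul a b) = ev z a * ev z b.
Proof.
rewrite /ev big_distrlr /=.
transitivity (\sum_(k < n) \sum_(i < n) \sum_(j < n)
  (if ((i + j) %% n == k)%N then ratr (a i) * ratr (b j) * z ^+ k else 0)).
  apply: eq_bigr => k _; rewrite ffunE rmorph_sum mulr_suml; apply: eq_bigr => i _.
  rewrite rmorph_sum mulr_suml; apply: eq_bigr => j _.
  by case: eqP => _; rewrite ?rmorphM ?rmorph0 ?mul0r.
rewrite exchange_big; apply: eq_bigr => i _; rewrite exchange_big.
apply: eq_bigr => j _.
rewrite (bigD1 (Ordinal (ltn_pmod (i + j) n0))) //= eqxx big1 ?addr0.
  by rewrite expr_mod // exprD; ring.
move=> k hk; case: eqP => // h; exfalso; move/eqP: hk; apply.
by apply: val_inj; rewrite /= h.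
Qed.

Lemma ev_inv n (zeta : algC) (pz : n.-primitive_root zeta) (a : {ffun 'I_n -> rat}) (k0 : 'I_n) :
  \sum_(t < n) ev (zeta ^+ t) a * zeta ^+ ((n - k0) * t) = n%:R * ratr (a k0).
Proof.
rewrite /ev.
transitivity (\sum_(k < n) ratr (a k) * \sum_(t < n) zeta ^+ ((k + (n - k0)) * t)).
  under eq_bigr do rewrite mulr_suml.
  rewrite exchange_big /=; apply: eq_bigr => k _.
  rewrite mulr_sumr; apply: eq_bigr => t _.
  by rewrite -mulrA -exprM -exprD mulnDl [(t * k)%N]mulnC.
rewrite (bigD1 k0) //= [X in _ + X]big1 ?addr0.
  rewrite sum_root // ifT; first by rewrite mulrC.
  by rewrite subnKC ?dvdnn // ltnW.
move=> k hk; rewrite sum_root // ifF ?mulr0 //.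
apply/negP => /dvdnP [c hc].
have hk1 := ltn_ord k; have hk2 := ltn_ord k0.
have hne : (k : nat) <> k0 by move=> h; move/eqP: hk; apply; apply: val_inj.
have hc1 : c = 1%N by nia.
subst c; lia.
Qed.

Lemma ev_inj n (zeta : algC) (pz : n.-primitive_root zeta) (a b : {ffun 'I_n -> rat}) :
  (forall t : 'I_n, ev (zeta ^+ t) a = ev (zeta ^+ t) b) -> a = b.
Proof.
move=> h; apply/ffunP => k.
have n0 : (0 < n)%N := prim_order_gt0 pz.
have := ev_inv pz a k; rewrite (eq_bigr _ (fun t _ => congr1 (fun x => x * _) (h t))).
rewrite ev_inv // => /(mulfI _).
have -> : (n%:R : algC) != 0 by rewrite pnatr_eq0 -lt0n.
by move=> /(_ isT) /fmorph_inj.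
Qed.

Lemma sum_mult (F : nat -> algC) d N : (0 < d)%N ->
  \sum_(0 <= k < (N * d)%N) (if (d %| k)%N then F k else 0) = \sum_(0 <= j < N) F (j * d)%N.
Proof.
move=> d0; elim: N => [|N IH]; first by rewrite !big_geq.
rewrite big_nat_recr //= -IH mulSn addnC (big_cat_nat _ (leq_addr _ _)) //=.
congr (_ + _).
rewrite big_ltn; last by lia.
rewrite dvdn_mull // big_nat_cond big1 ?addr0 //.
move=> k /andP[/andP[h1 h2] _]; case: ifP => // /dvdnP [c hc]; exfalso.
subst k; case: (leqP c N) => hcN.
  by have := leq_mul hcN (leqnn d); lia.
by have := leq_mul hcN (leqnn d); rewrite mulSn; lia.
Qed.

Definition avg (n d : nat) : {ffun 'I_n -> rat} :=
  [ffun k : 'I_n => if (d %| k)%N then d%:R / n%:R else 0].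

Lemma ev_avg n (zeta : algC) (pz : n.-primitive_root zeta) (t d : nat) :
  (d %| n)%N -> (0 < d)%N -> ev (zeta ^+ t) (avg n d) = (n %| t * d)%N%:R.
Proof.
move=> dn d0; have n0 : (0 < n)%N := prim_order_gt0 pz.
rewrite /ev.
transitivity ((d%:R / n%:R) *
   \sum_(0 <= k < (n %/ d) * d) (if (d %| k)%N then zeta ^+ t ^+ k else 0)).
  rewrite divnK // big_mkord mulr_sumr; apply: eq_bigr => k _.
  rewrite ffunE; case: ifP => _; last by rewrite rmorph0 !mul0r mulr0.
  by rewrite fmorph_div !rmorph_nat.
rewrite sum_mult //.
under eq_bigr do rewrite mulnC exprM.
rewrite -exprM big_mkord (prim_order_dvd pz).
case: eqP => h.
  rewrite h (eq_bigr (fun _ => 1)) ?sumr_const ?card_ord; last by move=> i _; rewrite expr1n.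
  by rewrite mulrAC -natrM mulnC divnK // mulfV // pnatr_eq0 -lt0n.
rewrite geo0 ?mulr0 //; last by apply/eqP.
by rewrite -exprM -mulnA (mulnC d) divnK // mulnC exprM (prim_expr_order pz) expr1n.
Qed.

Definition dl (g : nat -> bool) (i : nat) : int := (g i)%:Z - (g i.+1)%:Z.

Lemma gamma_exists r k : (k <= 2 ^ r)%N -> exists g : nat -> bool,
  (forall i, (r < i)%N -> g i = false) /\
  \sum_(i < r.+1) dl g i * (2 ^ i)%N%:Z = k%:Z.
Proof.
elim: r k => [|r IH] k hk.
  exists (fun i => (i == 0)%N && (k == 1)%N); split.
    by case.
  rewrite big_ord1 /dl /= expn0 mulr1 subr0.
  by case: k hk => [|[|]].
have [hk1|hk1] := leqP k (2 ^ r).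
  have [g [g0 hs]] := IH k hk1; exists g; split.
    by move=> i hi; apply: g0; lia.
  rewrite big_ord_recr /= hs /dl !g0 ?subrr ?mul0r ?addr0 //; lia.
have hk2 : (k - 2 ^ r <= 2 ^ r)%N.
  move: hk; rewrite expnS mul2n -addnn; lia.
have [g [g0 hs]] := IH (k - 2 ^ r)%N hk2.
exists (fun i => if i == r.+1 then true else g i); split.
  by move=> i hi; rewrite ifF ?g0 //; lia.
rewrite big_ord_recr /= big_ord_recr /=.
move: hs; rewrite big_ord_recr /= => hs.
have -> : \sum_(i < r) dl (fun i => if i == r.+1 then true else g i) i * (2 ^ i)%N%:Z
   = \sum_(i < r) dl g i * (2 ^ i)%N%:Z.
  apply: eq_bigr => i _; rewrite /dl ifF ?ifF //; have := ltn_ord i; lia.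
move: hs; rewrite /dl /= eqxx ifF; last by lia.
rewrite ifF; last by lia.
rewrite (g0 r.+1) ?(g0 r.+2) //.
move=> hs.
have -> : \sum_(i < r) dl g i * (2 ^ i)%N%:Z =
   (k - 2 ^ r)%N%:Z - (g r)%:Z * (2 ^ r)%N%:Z by rewrite -hs /= subr0; ring.
have hK : ((k - 2 ^ r)%N : int) = (k : int) - ((2 ^ r)%N : int) by rewrite subzn // ltnW.
rewrite hK /= expnS PoszM; ring.
Qed.

Section SM.
Local Open Scope nat_scope.
Lemma split_m m r s : odd s -> (s - 1 <= 2 ^ r)%N -> (m <= 2 ^ r * s)%N ->
  exists k1 k2, [/\ (k1 <= 2 ^ r)%N, (k2 <= 2 ^ r)%N & m = k1 + (s - 1) * k2]%N.
Proof.
move=> so hs hm.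
case: (leqP s 1) => hs1.
  exists m, 0%N; split => //; last by lia.
  have s1 : s = 1%N by case: s so hs1 hm hs => [|[|]].
  by subst s; rewrite muln1 in hm.
case: (leqP (2 ^ r * (s - 1)) m) => h.
  exists (m - 2 ^ r * (s - 1))%N, (2 ^ r); split => //; last by lia.
  rewrite mulnBr muln1 in h *; lia.
exists (m %% (s - 1)), (m %/ (s - 1)); split.
- have := ltn_pmod m (_ : 0 < s - 1)%N; lia.
- rewrite -ltnS ltn_divLR; last by lia.
  by rewrite mulnC; lia.
- by rewrite addnC mulnC -divn_eq.
Qed.
End SM.

Lemma mono_thr (p : nat -> bool) R : (forall i, (i < R)%N -> p i -> p i.+1) ->
  exists I, forall i, (i <= R)%N -> p i = (I <= i)%N.
Proof.
elim: R => [|R IH] hm.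
  by exists (if p 0%N then 0%N else 1%N) => i; rewrite leqn0 => /eqP ->; case: (p 0%N).
have [I hI] := IH (fun i hi => hm i (ltnW hi)).
case hR : (p R.+1).
  exists (minn I R.+1) => i; rewrite leq_eqVlt => /orP [/eqP ->|hi].
    by rewrite hR geq_minr.
  rewrite hI; last by [].
  have hiR : (i <= R)%N by [].
  case: (leqP I R.+1) => h //; lia.
exists R.+2 => i; rewrite leq_eqVlt => /orP [/eqP ->|hi]; first by rewrite hR; lia.
have hIR : (R < I)%N.
  case: (leqP I R) => // h.
  have : p R by rewrite hI.
  by move/(hm R (ltnSn R)); rewrite hR.
rewrite hI; last by [].
lia.
Qed.

Lemma tele_thr (g : nat -> bool) I R :
  \sum_(i < R.+1) (dl g i)%:~R * ((I <= i)%N)%:R =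
    ((g (minn I R.+1))%:R - (g R.+1)%:R : algC).
Proof.
elim: R => [|R IH].
  rewrite big_ord1 /dl /=.
  case: I => [|I] /=; first by rewrite mulr1 intrD intrN.
  by rewrite mulr0 minnC /minn; case: I => [|I]; rewrite /= subrr.
rewrite big_ord_recr /= IH /dl.
case: (leqP I R.+1) => h.
  rewrite /= mulr1 (minn_idPl (leqW h)) intrB -!pmulrn; ring.
rewrite /= mulr0 addr0 (minn_idPr h) !subrr //.
Qed.

Lemma T_bool (g p : nat -> bool) R : (forall i, (i < R)%N -> p i -> p i.+1) ->
  g R.+1 = false ->
  exists b : bool, \sum_(i < R.+1) (dl g i)%:~R * (p i)%:R = (b%:R : algC).
Proof.
move=> hm hg; have [I hI] := mono_thr hm.
exists (g (minn I R.+1)).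
transitivity (\sum_(i < R.+1) (dl g i)%:~R * ((I <= i)%N)%:R : algC).
  apply: eq_bigr => i _; rewrite hI //; have := ltn_ord i; lia.
by rewrite tele_thr hg subr0.
Qed.

Lemma ev0 n z : ev z (0 : {ffun 'I_n -> rat}) = 0.
Proof. by rewrite /ev big1 // => k _; rewrite ffunE rmorph0 mul0r. Qed.

Lemma evD n z (a b : {ffun 'I_n -> rat}) : ev z (a + b) = ev z a + ev z b.
Proof. by rewrite /ev -big_split; apply: eq_bigr => k _; rewrite ffunE rmorphD mulrDl. Qed.

Lemma evZ n z c (a : {ffun 'I_n -> rat}) : ev z (gscale c a) = ratr c * ev z a.
Proof. by rewrite /ev mulr_sumr; apply: eq_bigr => k _; rewrite ffunE rmorphM mulrA. Qed.

Lemma ev_sum n z m (F : 'I_m -> {ffun 'I_n -> rat}) :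
  ev z (\sum_(i < m) F i) = \sum_(i < m) ev z (F i).
Proof. exact: (big_morph _ (evD z) (ev0 _ z)). Qed.

Definition E (r s : nat) (g1 g2 : nat -> bool) : {ffun 'I_(2 ^ r * s) -> rat} :=
  \sum_(i < r.+1) (gscale (dl g2 i)%:~R (avg (2 ^ r * s) (2 ^ i * s))
                  + gscale (dl g1 i - dl g2 i)%:~R (avg (2 ^ r * s) (2 ^ i))).

Lemma E_val r s g1 g2 (k : 'I_(2 ^ r * s)) : (0 < s)%N ->
  (2 ^ r * s)%:R * E r s g1 g2 k =
  \sum_(i < r.+1) ((dl g2 i)%:~R * (if (2 ^ i * s %| k)%N then (2 ^ i * s)%:R else 0)
       + (dl g1 i - dl g2 i)%:~R * (if (2 ^ i %| k)%N then (2 ^ i)%:R else 0)).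
Proof.
move=> s0; rewrite /E sum_ffunE mulr_sumr; apply: eq_bigr => i _.
have n0 : (2 ^ r * s)%:R != 0 :> rat by rewrite pnatr_eq0 muln_eq0 expn_eq0 /=; lia.
rewrite !ffunE.
case: ifP => _; case: ifP => _; rewrite ?mulr0 ?addr0 ?add0r //; field => //.
all: rewrite !pnatr_eq0 expn_eq0 /= andbT; lia.
Qed.

Lemma E_int r s g1 g2 (k : 'I_(2 ^ r * s)) : (0 < s)%N ->
  exists z : int, (2 ^ r * s)%:R * E r s g1 g2 k = z%:~R.
Proof.
move=> s0; rewrite E_val //.
exists (\sum_(i < r.+1) (dl g2 i * (if (2 ^ i * s %| k)%N then (2 ^ i * s)%:R else 0)
       + (dl g1 i - dl g2 i) * (if (2 ^ i %| k)%N then (2 ^ i)%:R else 0))).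
rewrite (big_morph (fun z : int => (z%:~R : rat)) (@intrD _) (mulr0z _)).
apply: eq_bigr => i _.
case: ifP => _; case: ifP => _;
  by rewrite ?(intrD, intrM, intrN, intrB, mulrz_nat, mulr0z, mulr0, addr0).
Qed.

Section Arith.
Local Open Scope nat_scope.

Lemma F1 r s t i : odd s -> s %| t ->
  (2 ^ r * s %| t * (2 ^ i * s)) = (2 ^ r * s %| t * 2 ^ i).
Proof.
move=> so /dvdnP [c ->].
have s0 : 0 < s by case: s so.
have cop : coprime (2 ^ r) s by rewrite coprimeXl // coprime2n.
have -> : c * s * (2 ^ i * s) = (c * 2 ^ i * s) * s by ring.
have -> : c * s * 2 ^ i = (c * 2 ^ i) * s by ring.
rewrite !dvdn_pmul2r // Gauss_dvdl //.
Qed.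

Lemma F2 r s t i : odd s -> ~~ (s %| t) -> (2 ^ r * s %| t * 2 ^ i) = false.
Proof.
move=> so hst; apply/negbTE/negP => h.
have : s %| t * 2 ^ i by apply: dvdn_trans h; apply: dvdn_mull.
rewrite Gauss_dvdl ?(negbTE hst) //.
by rewrite coprimeXr // coprimen2.
Qed.

Lemma dvd_sym n d (i k : nat) : d %| n -> (i + k) %% n = 0 -> (d %| i) = (d %| k).
Proof.
move=> dn hik.
have : d %| i + k by apply: dvdn_trans dn _; rewrite /dvdn hik.
move=> h; apply/idP/idP => h2.
  by rewrite -(dvdn_addr _ h2).
by rewrite -(dvdn_addl _ h2).
Qed.

End Arith.

Lemma ev_E r s g1 g2 (zeta : algC) (pz : (2 ^ r * s).-primitive_root zeta) (t : nat) :
  ev (zeta ^+ t) (E r s g1 g2) =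
  \sum_(i < r.+1) ((dl g2 i)%:~R * ((2 ^ r * s) %| t * (2 ^ i * s))%N%:R
     + (dl g1 i - dl g2 i)%:~R * ((2 ^ r * s) %| t * 2 ^ i)%N%:R).
Proof.
have n0 := prim_order_gt0 pz.
have s0 : (0 < s)%N by move: n0; rewrite muln_gt0 => /andP[].
rewrite /E ev_sum; apply: eq_bigr => i _.
have hi : (i <= r)%N by have := ltn_ord i; lia.
rewrite evD !evZ !(ev_avg pz) ?ratr_int //.
- by rewrite dvdn_mulr ?dvdn_exp2l.
- by rewrite expn_gt0.
- by rewrite dvdn_mul ?dvdn_exp2l.
- by rewrite muln_gt0 expn_gt0.
Qed.

Lemma ev_E_bool r s g1 g2 (zeta : algC) (pz : (2 ^ r * s).-primitive_root zeta) (t : nat) :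
  odd s -> g1 r.+1 = false -> g2 r.+1 = false ->
  exists b : bool, ev (zeta ^+ t) (E r s g1 g2) = b%:R.
Proof.
move=> so h1 h2; rewrite (ev_E g1 g2 pz) big_split /=.
have -> : \sum_(i < r.+1) (dl g1 i - dl g2 i)%:~R * (2 ^ r * s %| t * 2 ^ i)%N%:R =
   \sum_(i < r.+1) (dl g1 i)%:~R * (2 ^ r * s %| t * 2 ^ i)%N%:R -
   \sum_(i < r.+1) (dl g2 i)%:~R * (2 ^ r * s %| t * 2 ^ i)%N%:R :> algC.
  by rewrite -sumrB; apply: eq_bigr => i _; rewrite intrB mulrBl.
have mono d : (forall i, (i < r)%N -> (2 ^ r * s %| t * (2 ^ i * d))%N ->
     (2 ^ r * s %| t * (2 ^ i.+1 * d))%N).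
  move=> i _ h; apply: dvdn_trans h _.
  by rewrite dvdn_mul // dvdn_mul // dvdn_exp2l.
case hst : (s %| t)%N.
  have -> : \sum_(i < r.+1) (dl g2 i)%:~R * (2 ^ r * s %| t * (2 ^ i * s))%N%:R =
            \sum_(i < r.+1) (dl g2 i)%:~R * (2 ^ r * s %| t * 2 ^ i)%N%:R :> algC.
    by apply: eq_bigr => i _; rewrite F1.
  rewrite addrC subrK.
  apply: (T_bool (p := fun i => (2 ^ r * s %| t * 2 ^ i)%N)) => //.
  move=> i hi h; have := mono 1%N i hi; rewrite !muln1; exact.
have z g : \sum_(i < r.+1) (dl g i)%:~R * (2 ^ r * s %| t * 2 ^ i)%N%:R = 0 :> algC.
  by apply: big1 => i _; rewrite F2 ?hst // mulr0.
rewrite !z.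
rewrite subrr addr0.
apply: (T_bool (p := fun i => (2 ^ r * s %| t * (2 ^ i * s))%N)) => //.
by move=> i hi h; apply: mono.
Qed.

Lemma E_idem r s g1 g2 : odd s -> g1 r.+1 = false -> g2 r.+1 = false ->
  E r s g1 g2 = gmul (E r s g1 g2) (E r s g1 g2).
Proof.
move=> so h1 h2.
have s0 : (0 < s)%N by case: s so.
have n0 : (0 < 2 ^ r * s)%N by rewrite muln_gt0 expn_gt0.
have [zeta pz] := C_prim_root_exists n0.
symmetry; apply: (ev_inj pz) => t.
rewrite ev_mul //; last by rewrite -exprM mulnC exprM (prim_expr_order pz) expr1n.
have [b ->] := ev_E_bool pz t so h1 h2.
by case: b; rewrite ?mulr0 ?mulr1.
Qed.

Lemma gstar_sym n (a : {ffun 'I_n -> rat}) : (0 < n)%N ->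
  (forall i k : 'I_n, ((i + k) %% n = 0)%N -> a i = a k) -> gstar a = a.
Proof.
move=> n0 h; apply/ffunP => k; rewrite ffunE.
pose i0 := Ordinal (ltn_pmod (n - k) n0).
have hi0 : ((i0 + k) %% n = 0)%N.
  by rewrite /= modnDml subnK ?modnn // ltnW.
rewrite (bigD1 i0) /= ?hi0 ?eqxx // big1 ?addr0; first exact: h.
move=> i hi; case: eqP => // hik; exfalso; move/eqP: hi; apply.
apply: val_inj.
have : (i + k == i0 + k %[mod n])%N by rewrite hik hi0.
by rewrite eqn_modDr !modn_small // => /eqP.
Qed.

Lemma E_star r s g1 g2 : odd s -> gstar (E r s g1 g2) = E r s g1 g2.
Proof.
move=> so.
have s0 : (0 < s)%N by case: s so.
have n0 : (0 < 2 ^ r * s)%N by rewrite muln_gt0 expn_gt0.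
apply: gstar_sym => // i k hik.
have nz : (2 ^ r * s)%:R != 0 :> rat by rewrite pnatr_eq0 -lt0n.
apply: (mulfI nz); rewrite !E_val //.
apply: eq_bigr => j _.
have hj : (j <= r)%N by have := ltn_ord j; lia.
have e2 : (2 ^ j %| i)%N = (2 ^ j %| k)%N by apply: dvd_sym hik; rewrite dvdn_mulr ?dvdn_exp2l.
rewrite (dvd_sym (d := (2 ^ j * s)%N) _ hik) ?e2 //.
- by rewrite dvdn_mul ?dvdn_exp2l.
Qed.

Lemma E_tr r s g1 g2 : (0 < s)%N ->
  (2 ^ r * s)%:R * gtr (E r s g1 g2) =
  \sum_(i < r.+1) ((dl g2 i)%:~R * (2 ^ i * s)%:R + (dl g1 i - dl g2 i)%:~R * (2 ^ i)%:R).
Proof.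
move=> s0.
have n0 : (0 < 2 ^ r * s)%N by rewrite muln_gt0 expn_gt0.
rewrite /gtr (big_pred1 (Ordinal n0)); last first.
  by move=> i; rewrite /= -val_eqE.
by rewrite E_val //; apply: eq_bigr => i _; rewrite /= !dvdn0.
Qed.

Lemma sum_toQ (g : nat -> bool) r k :
  \sum_(i < r.+1) dl g i * (2 ^ i)%N%:Z = k%:Z ->
  \sum_(i < r.+1) (dl g i)%:~R * (2 ^ i)%:R = k%:R :> rat.
Proof.
move=> /(congr1 (fun z : int => (z%:~R : rat))).
rewrite (big_morph (fun z : int => (z%:~R : rat)) (@intrD _) (mulr0z _)) => h.
rewrite [RHS](_ : _ = (k%:Z)%:~R) // -h.
by apply: eq_bigr => i _; rewrite intrM.
Qed.

Lemma part2 (q : rat) (hq : 0 <= q <= 1) :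
  (forall m n r s : nat,
      (0 < n)%N -> q = m%:R / n%:R -> n = (2 ^ r * s)%N -> odd s -> (s - 1 <= 2 ^ r)%N ->
      exists e : {ffun 'I_n -> rat},
        e = gstar e /\ e = gmul e e /\ gtr e = q /\ gintegral (gscale n%:R e)).
Proof.
move=> m n r s n0 hqm hn so hs. rewrite {}hn in n0 hqm *.
have s0 : (0 < s)%N by rewrite lt0n; apply/negP => /eqP e0; rewrite e0 in so.
have nz : (2 ^ r * s)%:R != 0 :> rat by rewrite pnatr_eq0 -lt0n.
have hmn : (m <= 2 ^ r * s)%N.
  move: hq => /andP[_]; rewrite hqm ler_pdivrMr ?ltr0n // mul1r ler_nat //.
have [k1 [k2 [hk1 hk2 hm]]] := split_m so hs hmn.
have [g1 [g1f hg1]] := gamma_exists hk1.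
have [g2 [g2f hg2]] := gamma_exists hk2.
have h1 : g1 r.+1 = false by apply: g1f.
have h2 : g2 r.+1 = false by apply: g2f.
exists (E r s g1 g2); split; first by rewrite E_star.
split; first exact: E_idem.
split.
  have ht := E_tr r g1 g2 s0.
  have ee : \sum_(i < r.+1) ((dl g2 i)%:~R * (2 ^ i * s)%:R + (dl g1 i - dl g2 i)%:~R * (2 ^ i)%:R)
     = s%:R * (\sum_(i < r.+1) (dl g2 i)%:~R * (2 ^ i)%:R) +
       (\sum_(i < r.+1) (dl g1 i)%:~R * (2 ^ i)%:R - \sum_(i < r.+1) (dl g2 i)%:~R * (2 ^ i)%:R) :> rat.
    rewrite -sumrB mulr_sumr -big_split; apply: eq_bigr => i _.
    rewrite natrM intrB /=; ring.
  rewrite ee (sum_toQ hg1) (sum_toQ hg2) in ht.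
  apply: (mulfI nz); rewrite ht hqm mulrCA divff // mulr1 hm natrD natrM natrB //; ring.
move=> i; rewrite ffunE; exact: E_int.
Qed.

Lemma part1 (q : rat) (hq : 0 <= q <= 1) :
  (exists m n r s : nat,
      (0 < n)%N /\ q = m%:R / n%:R /\ n = (2 ^ r * s)%N /\ odd s /\ (s - 1 <= 2 ^ r)%N).
Proof.
move: hq => /andP [hq0 _].
set A := absz (numq q); set B := absz (denq q).
have hA : numq q = A%:Z by rewrite /A abszE ger0_norm // numq_ge0.
have hB : denq q = B%:Z by rewrite /B abszE ger0_norm // ltW // denq_gt0.
have B0 : (0 < B)%N by rewrite -ltz_nat -hB denq_gt0.
have [s0 hcop hb] := pfactor_coprime (isT : prime 2) B0.
set r0 := logn 2 B in hb.
have so : odd s0 by rewrite -coprime2n.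
have s00 : (0 < s0)%N by case: s0 so {hcop hb}.
exists (A * 2 ^ s0)%N, (2 ^ (r0 + s0) * s0)%N, (r0 + s0)%N, s0; split.
  by rewrite muln_gt0 expn_gt0.
split.
  rewrite -[q in LHS]divq_num_den hA hB hb.
  rewrite !natrM expnD !natrM.
  have h2 : (2 ^ s0)%:R != 0 :> rat by rewrite pnatr_eq0 expn_eq0.
  have h3 : (2 ^ r0)%:R != 0 :> rat by rewrite pnatr_eq0 expn_eq0.
  have h4 : s0%:R != 0 :> rat by rewrite pnatr_eq0 -lt0n.
  rewrite -!pmulrn natrM; field; rewrite h2 h3 h4 //.
split => //; split => //.
have := ltn_expl s0 (isT : (1 < 2)%N).
have := leq_pexp2l (isT : (0 < 2)%N) (leq_addl r0 s0).
lia.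
Qed.

Unset Implicit Arguments.

Theorem lemma5p1 (q : rat) (hq : 0 <= q <= 1) :
  (exists m n r s : nat,
      (0 < n)%N /\ q = m%:R / n%:R /\ n = (2 ^ r * s)%N /\ odd s /\ (s - 1 <= 2 ^ r)%N)
  /\
  (forall m n r s : nat,
      (0 < n)%N -> q = m%:R / n%:R -> n = (2 ^ r * s)%N -> odd s -> (s - 1 <= 2 ^ r)%N ->
      exists e : {ffun 'I_n -> rat},
        e = gstar e /\ e = gmul e e /\ gtr e = q /\ gintegral (gscale n%:R e)).
Proof. split; [exact: part1 | exact: part2]. Qed.
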